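(* Let $f_1,\dots,f_n$ be nondecreasing linear functions at least one of which is constant, and put $\beta_{\min}=\min\{\beta(f_i)\mid\alpha(f_i)=0\}$ and $\beta_{\rm OPT}=\min\{f^\sigma\mid\sigma\text{ a permutation of }[n]\}$ (each $f^\sigma$ is a constant function, identified with its value). Then $\beta_{\rm OPT}=\beta_{\min}$ if and only if $\theta(f_i)\in[\theta(\beta_{\min})-\pi,\theta(\beta_{\min})]_{2\pi}\cup\{\bot\}$ for every $i\in[n]$.
   Context: A linear function is $f(x)=ax+b$; $\alpha(f)=a$, $\beta(f)=b$; nondecreasing means $a\ge0$, constant means $a=0$. $\vec f=(b,1-a)^\top$ and $\theta(f)\in[0,2\pi)$ is its polar angle, $\theta(f)=\bot$ if $\vec f=0$. For a real $c$, $\theta(c)$ denotes the angle of the constant function $x\mapsto c$, i.e. the polar angle of $(c,1)^\top$. $[\theta_1,\theta_2]_{2\pi}=\{\theta\in[\lambda_1,\lambda_2]\mid\lambda_1-\theta_1,\lambda_2-\theta_2\in2\pi\mathbb{Z},\ \lambda_2-\lambda_1\in[0,2\pi)\}$. $f^\sigma=f_{\sigma(n)}\circ\cdots\circ f_{\sigma(1)}$. *)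

(* Defs.v *)
From HB Require Import structures.
From mathcomp Require Import all_boot all_order all_algebra all_fingroup.
From mathcomp Require Import all_classical all_reals all_analysis.
Set Implicit Arguments. Unset Strict Implicit. Unset Printing Implicit Defensive.
Import Order.TTheory GRing.Theory Num.Theory.
Local Open Scope ring_scope.

Definition linfn (R : realType) := (R * R)%type.
Definition alpha {R : realType} (f : linfn R) : R := f.1.
Definition beta {R : realType} (f : linfn R) : R := f.2.
Definition lf_eval {R : realType} (f : linfn R) (x : R) : R := alpha f * x + beta f.

Definition lf_comp {R : realType} (g h : linfn R) : linfn R :=
  (alpha g * alpha h, alpha g * beta h + beta g).
Definition lf_id {R : realType} : linfn R := (1, 0).

(* f^sigma = f_{sigma(n)} o ... o f_{sigma(1)} *)
Definition lf_perm {R : realType} {n : nat} (f : 'I_n -> linfn R)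
  (s : {perm 'I_n}) : linfn R :=
  foldl (fun acc i => lf_comp (f (s i)) acc) lf_id (enum 'I_n).

Definition polar_angle {R : realType} (x y : R) : R :=
  let r := Num.sqrt (x ^+ 2 + y ^+ 2) in
  if 0 <= y then acos (x / r) else 2 * pi - acos (x / r).

(* vec f = (b, 1 - a); theta f = None encodes bottom *)
Definition theta {R : realType} (f : linfn R) : option R :=
  if (beta f == 0) && (1 - alpha f == 0) then None
  else Some (polar_angle (beta f) (1 - alpha f)).

(* theta of the constant function x |-> c, i.e. polar angle of (c, 1) *)
Definition theta_c {R : realType} (c : R) : R := polar_angle c 1.

Definition arc2pi {R : realType} (t1 t2 : R) : set R :=
  [set t | exists l1 l2 : R,
     (exists k : int, l1 - t1 = k%:~R * (2 * pi)) /\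
     (exists k : int, l2 - t2 = k%:~R * (2 * pi)) /\
     0 <= l2 - l1 < 2 * pi /\ l1 <= t <= l2].

(* beta_min, with seed the beta of a known constant function f i0 *)
Definition beta_min {R : realType} {n : nat} (f : 'I_n -> linfn R) (i0 : 'I_n) : R :=
  \big[Num.min/beta (f i0)]_(i | alpha (f i) == 0) beta (f i).

Definition beta_opt {R : realType} {n : nat} (f : 'I_n -> linfn R) : R :=
  \big[Num.min/beta (lf_perm f 1%g)]_(s : {perm 'I_n}) beta (lf_perm f s).

(* Main.v *)
Require Import Defs.
From HB Require Import structures.
From mathcomp Require Import all_boot all_order all_algebra all_fingroup.
From mathcomp Require Import all_classical all_reals all_analysis.
From mathcomp Require Import ring lra zify.
Import Order.TTheory GRing.Theory Num.Theory.
Local Open Scope ring_scope.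
Local Open Scope classical_set_scope.

Lemma int_small (R : realType) (k : int) : -1 < (k%:~R : R) < 1 -> k = 0.
Proof.
case/andP => h1 h2.
have : (-1)%:~R < (k%:~R : R) by rewrite rmorphN rmorph1 // .
rewrite ltr_int => a.
have : (k%:~R : R) < 1%:~R by rewrite rmorph1.
rewrite ltr_int => b. lia.
Qed.

Lemma int_01 (R : realType) (k : int) : -1 < (k%:~R : R) < 2 -> k = 0 \/ k = 1.
Proof.
case/andP => h1 h2.
have : (-1)%:~R < (k%:~R : R) by rewrite rmorphN rmorph1 // .
rewrite ltr_int => a.
have : (k%:~R : R) < 2%:~R by [].
rewrite ltr_int => b. lia.
Qed.

Lemma arc_iff (R : realType) (th t : R) : 0 < th < pi -> 0 <= t < 2 * pi ->
  arc2pi (th - pi) th t <-> (t <= th \/ th + pi <= t).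
Proof.
move=> /andP[th0 thp] /andP[t0 t2]; have p0 := @pi_gt0 R.
split.
- case=> l1 [l2 [[k1 e1] [[k2 e2] [/andP[d0 d2] /andP[a1 a2]]]]].
  have hk : k2 - k1 = 0.
    apply: (@int_small R); rewrite intrB.
    apply/andP; split; nra.
  have ek : k2 = k1 by lia.
  subst k2.
  have : k1 = 0 \/ k1 = 1.
    apply: (@int_01 R); apply/andP; split; nra.
  case=> ek1; rewrite ek1 in e1 e2.
  + left. rewrite mulr0z mul0r in e2. lra.
  + right. rewrite rmorph1 mul1r in e1. lra.
- case=> h.
  + exists (th - pi), th; split; first by exists 0; rewrite mulr0z mul0r subrr.
    split; first by exists 0; rewrite mulr0z mul0r subrr.
    split; apply/andP; split; lra.
  + exists (th + pi), (th + 2 * pi); split; first by exists 1; rewrite rmorph1 mul1r; lra.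
    split; first by exists 1; rewrite rmorph1 mul1r; lra.
    split; apply/andP; split; lra.
Qed.

Lemma cross_W (R : realType) (m b c ru rv : R) : 0 < ru -> ru^+2 = m^+2+1 -> 0 < rv ->
  rv^+2 = b^+2+c^+2 -> 0 <= c -> m * c <= b -> m * rv <= b * ru.
Proof.
move=> ru0 eu rv0 ev c0 h.
have [b0|b0] := leP 0 b.
- have [m0|m0] := leP m 0; first nra.
  have hh : 0 <= (b - m * c) * (b + m * c) by apply: mulr_ge0; nra.
  have : (m * rv)^+2 <= (b * ru)^+2 by rewrite !exprMn eu ev; nra.
  have : 0 <= b * ru by nra.
  nra.
- have m0 : m < 0 by nra.
  have hh : (b - m * c) * (b + m * c) <= 0 by apply: mulr_ge0_le0; nra.
  have : (b * ru)^+2 <= (m * rv)^+2 by rewrite !exprMn eu ev; nra.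
  have : m * rv < 0 by nra.
  have : b * ru < 0 by nra.
  nra.
Qed.

Lemma cross_S (R : realType) (m b c ru rv : R) : 0 < ru -> ru^+2 = m^+2+1 -> 0 < rv ->
  rv^+2 = b^+2+c^+2 -> 0 <= c -> b < m * c -> b * ru < m * rv.
Proof.
move=> ru0 eu rv0 ev c0 h.
have [b0|b0] := leP 0 b.
- have m0 : 0 < m by nra.
  have c0' : 0 < c by nra.
  have hh : 0 < (m * c - b) * (m * c + b) by apply: mulr_gt0; nra.
  have : (b * ru)^+2 < (m * rv)^+2 by rewrite !exprMn eu ev; nra.
  have : 0 < m * rv by nra.
  have : 0 <= b * ru by nra.
  nra.
- have [m0|m0] := leP 0 m; first nra.
  have [c0'|c0'] := eqVneq c 0.
    subst c; rewrite mulr0 in h.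
    have e1 : (rv - - b) * (rv + - b) = 0 by rewrite -subr_sqr ev; ring.
    have rvE : rv = - b.
      move/eqP: e1; rewrite mulf_eq0 => /orP[/eqP|/eqP]; [lra|nra].
    have : -m < ru.
      have : 0 < (ru - - m) * (ru + - m) by rewrite -subr_sqr eu; nra.
      nra.
    rewrite rvE; nra.
  have c1 : 0 < c by rewrite lt_neqAle eq_sym c0' c0.
  have hh : 0 < (m * c - b) * (- (m * c) - b) by apply: mulr_gt0; nra.
  have : (m * rv)^+2 < (b * ru)^+2 by rewrite !exprMn eu ev; nra.
  have : m * rv < 0 by nra.
  have : b * ru < 0 by nra.
  nra.
Qed.

Lemma cross (R : realType) (m b c ru rv : R) : 0 < ru -> ru^+2 = m^+2+1 -> 0 < rv ->
  rv^+2 = b^+2+c^+2 -> 0 <= c -> (m * rv <= b * ru) = (m * c <= b).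
Proof.
move=> a1 a2 a3 a4 a5; apply/idP/idP.
- move=> h; rewrite leNgt; apply/negP => h'.
  by have := @cross_S _ _ _ _ _ _ a1 a2 a3 a4 a5 h'; rewrite ltNge h.
- by move=> h; exact: (@cross_W _ _ _ _ _ _ a1 a2 a3 a4 a5 h).
Qed.

Lemma acos_le (R : realType) (x y : R) : -1 <= x <= 1 -> -1 <= y <= 1 ->
  (acos x <= acos y) = (y <= x).
Proof.
move=> hx hy.
rewrite leNgt -ltr_cos ?acosK ?in_itv /= ?acos_ge0 ?acos_lepi // -leNgt //.
Qed.

Lemma div_le (R : realType) (a c p q : R) : 0 < p -> 0 < q ->
  (a / p <= c / q) = (a * q <= c * p).
Proof.
move=> p0 q0. rewrite ler_pdivrMr // mulrAC ler_pdivlMr //.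
Qed.

Lemma pol_bnd (R : realType) (x y : R) : (x != 0) || (y != 0) ->
  0 < Num.sqrt (x^+2 + y^+2) /\ (Num.sqrt (x^+2 + y^+2))^+2 = x^+2 + y^+2 /\
  -1 <= x / Num.sqrt (x^+2 + y^+2) <= 1 /\
  (y != 0 -> -1 < x / Num.sqrt (x^+2 + y^+2) < 1).
Proof.
move=> nz.
set r := Num.sqrt _.
have s0 : 0 < x^+2 + y^+2.
  case/orP: nz => h.
  - have := sqr_ge0 y; have : 0 < x ^+ 2 by rewrite exprn_even_gt0 // ?h ?y0 orbT. lra.
  - have := sqr_ge0 x; have : 0 < y ^+ 2 by rewrite exprn_even_gt0 // ?h ?y0 orbT. lra.
have r2 : r ^+ 2 = x^+2 + y^+2 by rewrite sqr_sqrtr // ltW.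
have r0 : 0 < r by rewrite sqrtr_gt0.
split=> //; split=> //; split.
- rewrite ler_pdivrMr // ler_pdivlMr // mul1r mulN1r; nra.
- move=> y0; have : 0 < y ^+ 2 by rewrite exprn_even_gt0 // ?h ?y0 orbT.
  move=> y2.
  rewrite ltr_pdivrMr // ltr_pdivlMr // mul1r mulN1r; nra.
Qed.

Lemma char (R : realType) (m b c : R) : (b != 0) || (c != 0) ->
  arc2pi (theta_c m - pi) (theta_c m) (polar_angle b c) <-> m * c <= b.
Proof.
move=> nz.
have [ru0 [ru2 [ub us]]] := @pol_bnd R m 1 (introT orP (or_intror (oner_neq0 R))).
have [rv0 [rv2 [vb vs]]] := @pol_bnd R b c nz.
move: ru0 ru2 ub us rv0 rv2 vb vs.
rewrite /theta_c /polar_angle ler01 expr1n.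
set ru := Num.sqrt _; set rv := Num.sqrt _.
move=> ru0 ru2 ub us rv0 rv2 vb vs.
have := us (oner_neq0 R) => {}us.
have p0 := @pi_gt0 R.
have th0 : 0 < acos (m / ru) by apply: acos_gt0; case/andP: us => *; apply/andP; split; lra.
have thp : acos (m / ru) < pi by apply: acos_ltpi; case/andP: us => *; apply/andP; split; lra.
have ta0 := acos_ge0 vb; have tap := acos_lepi vb.
have [c0|c0] := leP 0 c.
- rewrite arc_iff; last (apply/andP; split; lra); last (apply/andP; split; lra).
  rewrite -(@cross R m b c ru rv ru0 ru2 rv0 rv2 c0).
  rewrite -div_le // -(@acos_le R (b / rv) (m / ru) vb ub).
  split; [case=> h; [done|lra] | by left].
- have cn : c != 0 by rewrite lt_eqF.
  have := vs cn => {}vs.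
  have tap' : acos (b / rv) < pi by apply: acos_ltpi; case/andP: vs => *; apply/andP; split; lra.
  have ta0' : 0 < acos (b / rv) by apply: acos_gt0; case/andP: vs => *; apply/andP; split; lra.
  rewrite arc_iff; last (apply/andP; split; lra); last (apply/andP; split; lra).
  have e : m * c <= b <-> (- m) * rv <= b * ru.
    have hc : 0 <= -c by lra.
    have ru2' : ru^+2 = (-m)^+2+1 by rewrite sqrrN.
    have rv2' : rv^+2 = b^+2 + (-c)^+2 by rewrite sqrrN.
    by rewrite (@cross R (-m) b (-c) ru rv ru0 ru2' rv0 rv2' hc) mulrNN.
  rewrite e.
  have e2 : (- m) * rv <= b * ru <-> acos (m / ru) <= acos (- (b / rv)).
    rewrite acos_le //; last by rewrite lerNl opprK lerNl andbC.
    rewrite lerNl -mulNr div_le //.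
  rewrite e2 acosN //.
  split; [case; lra | move=> h; right; lra].
Qed.

Lemma foldl_ind {A B : Type} (P : A -> Prop) (g : A -> B -> A) (l : seq B) (acc : A) :
  P acc -> (forall a x, P a -> P (g a x)) -> P (foldl g acc l).
Proof. by elim: l acc => [|x l IH] acc //= Pa H; apply: IH => //; apply: H. Qed.

Lemma foldl_map' {A B C : Type} (g : A -> B -> A) (h : C -> B) (l : seq C) (acc : A) :
  foldl g acc (map h l) = foldl (fun a x => g a (h x)) acc l.
Proof. by elim: l acc => [|x l IH] acc //=. Qed.

Lemma alpha_foldl (R : realType) (F : nat -> linfn R) {I : Type} (h : I -> linfn R) (l : seq I) acc :
  alpha (foldl (fun a x => lf_comp (h x) a) acc l) = alpha acc * \prod_(x <- l) alpha (h x).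
Proof.
elim: l acc => [|x l IH] acc /=; first by rewrite big_nil mulr1.
by rewrite IH big_cons /alpha /= mulrCA mulrA.
Qed.

Lemma perm_of_list (n : nat) (i0 : 'I_n) (l : seq 'I_n) : perm_eq l (enum 'I_n) ->
  exists s : {perm 'I_n}, map s (enum 'I_n) = l.
Proof.
move=> pl.
have sz : size l = n by rewrite (perm_size pl) size_enum_ord.
have ul : uniq l by rewrite (perm_uniq pl) enum_uniq.
have inj : injective (fun j : 'I_n => nth i0 l j).
  move=> j k /eqP; rewrite nth_uniq ?sz // => /eqP; apply: val_inj.
exists (perm inj).
rewrite (eq_map (permE inj)).
have -> : [seq nth i0 l j | j : 'I_n <- enum 'I_n] = map (nth i0 l) (map val (enum 'I_n))
  by rewrite -map_comp.
by rewrite val_enum_ord; rewrite -{2}(mkseq_nth i0 l) sz.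
Qed.

Lemma lf_perm_list (R : realType) (n : nat) (f : 'I_n -> linfn R) (i0 : 'I_n) (t : seq 'I_n) :
  uniq t ->
  exists s : {perm 'I_n}, lf_perm f s =
    foldl (fun a x => lf_comp (f x) a)
      (foldl (fun a x => lf_comp (f x) a) lf_id [seq x <- enum 'I_n | predC (mem t) x]) t.
Proof.
move=> ut.
have p1 : perm_eq ([seq x <- enum 'I_n | predC (mem t) x] ++ t) (enum 'I_n).
  rewrite perm_catC perm_sym -(perm_filterC (mem t) (enum 'I_n)) perm_sym perm_cat2r perm_sym.
  apply: uniq_perm => //; first by apply: filter_uniq; apply: enum_uniq.
  by move=> x; rewrite mem_filter mem_enum andbT.
have [s hs] := @perm_of_list n i0 _ p1.
exists s; rewrite /lf_perm -foldl_cat -hs; exact: (esym (foldl_map' _ _ _ _)).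
Qed.

Lemma bigmin_le (R : realType) (I : finType) (P : pred I) (F : I -> R) x0 i :
  P i -> \big[Num.min/x0]_(j | P j) F j <= F i.
Proof. by move=> Pi; rewrite (bigD1 i) //= ge_min lexx. Qed.

Lemma bigmin_ge (R : realType) (I : finType) (P : pred I) (F : I -> R) x0 y :
  y <= x0 -> (forall i, P i -> y <= F i) -> y <= \big[Num.min/x0]_(j | P j) F j.
Proof.
move=> h0 h; apply: (big_ind (fun v => y <= v)) => //.
by move=> a b ha hb; rewrite le_min ha hb.
Qed.

Lemma bigmin_attain (R : realType) (I : finType) (P : pred I) (F : I -> R) x0 :
  \big[Num.min/x0]_(j | P j) F j = x0 \/
  exists i, P i /\ \big[Num.min/x0]_(j | P j) F j = F i.
Proof.
apply: (big_ind (fun v => v = x0 \/ exists i, P i /\ v = F i)).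
- by left.
- move=> a b ha hb; have [h|h] := leP a b.
  + by [].
  + by [].
- by move=> i Pi; right; exists i.
Qed.

Lemma beta_comp (R : realType) (g h : linfn R) : beta (lf_comp g h) = alpha g * beta h + beta g.
Proof. by []. Qed.
Lemma alpha_comp (R : realType) (g h : linfn R) : alpha (lf_comp g h) = alpha g * alpha h.
Proof. by []. Qed.
Lemma eval_comp (R : realType) (g h : linfn R) x :
  lf_eval (lf_comp g h) x = lf_eval g (lf_eval h x).
Proof. rewrite /lf_eval alpha_comp beta_comp; ring. Qed.

Theorem mainTheorem16 (R : realType) (n : nat) (f : 'I_n -> linfn R) (i0 : 'I_n) :
  (forall i, 0 <= alpha (f i)) ->
  alpha (f i0) = 0 ->
  beta_opt f = beta_min f i0 <->
  (forall i, match theta (f i) with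
             | None => True
             | Some t => arc2pi (theta_c (beta_min f i0) - pi) (theta_c (beta_min f i0)) t
             end).
Proof.
move=> anon a0.
have [im [aim bim]] : exists im, alpha (f im) = 0 /\ beta (f im) = beta_min f i0.
  rewrite /beta_min; case: (@bigmin_attain R _ (fun i => alpha (f i) == 0) (fun i => beta (f i)) (beta (f i0))).
  - by move=> ->; exists i0.
  - by case=> i [/eqP ai ->]; exists i.
have mle : forall i, alpha (f i) = 0 -> beta_min f i0 <= beta (f i).
  by move=> i ai; apply: bigmin_le; rewrite ai.
set m := beta_min f i0 in bim mle *.
have charI : forall i, (match theta (f i) with
             | None => True
             | Some t => arc2pi (theta_c m - pi) (theta_c m) t
             end) <-> m * (1 - alpha (f i)) <= beta (f i).
  move=> i; rewrite /theta; case: ifP => h.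
  - case/andP: h => /eqP -> /eqP ->; rewrite mulr0; split => //.
  - apply: char; move/negbT: h; by rewrite negb_and.
have lower : (forall i, m * (1 - alpha (f i)) <= beta (f i)) ->
    forall s, m <= beta (lf_perm f s).
  move=> good s.
  have inv : 0 <= alpha (lf_perm f s) /\ forall x, m <= x -> m <= lf_eval (lf_perm f s) x.
    rewrite /lf_perm; apply: (foldl_ind (fun L => 0 <= alpha L /\ forall x, m <= x -> m <= lf_eval L x)).
    - split; first by rewrite /alpha /= ler01.
      by move=> x hx; rewrite /lf_eval /alpha /beta /= mul1r addr0.
    - move=> a x [ha hb]; split; first by rewrite alpha_comp mulr_ge0.
      move=> y hy; rewrite eval_comp.
      have := hb _ hy; have := good (s x); have := anon (s x).
      rewrite /lf_eval; nra.
  have aL : alpha (lf_perm f s) = 0.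
    rewrite /lf_perm (@alpha_foldl R (fun _ => lf_id) _ (fun x => f (s x))).
    rewrite (big_rem (s^-1 i0)%g) ?mem_enum //= permKV a0 mul0r mulr0 //.
  case: inv => _ /(_ m (lexx m)); rewrite /lf_eval aL mul0r add0r //.
split.
- move=> hopt i; apply/charI; rewrite leNgt; apply/negP => hb.
  have nim : im != i.
    apply/eqP => e; subst i; move: hb; rewrite aim bim subr0 mulr1 ltxx //.
  have ut : uniq [:: im; i] by rewrite /= andbT in_cons in_nil orbF.
  have [s hs] := @lf_perm_list R n f i0 [:: im; i] ut.
  have : beta_opt f <= beta (lf_perm f s) by apply: bigmin_le.
  rewrite hs.
  have -> : forall acc : linfn R, beta (foldl (fun a x => lf_comp (f x) a) acc [:: im; i]) =
     alpha (f i) * (alpha (f im) * beta acc + beta (f im)) + beta (f i) by [].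
  rewrite aim mul0r add0r bim hopt.
  have := anon i; nra.
- move=> H.
  have good : forall i, m * (1 - alpha (f i)) <= beta (f i) by move=> i; exact: (proj1 (charI i) (H i)).
  apply/eqP; rewrite eq_le; apply/andP; split.
  + have [s hs] := @lf_perm_list R n f i0 [:: im] erefl.
    have : beta_opt f <= beta (lf_perm f s) by apply: bigmin_le.
    rewrite hs.
    have -> : forall acc : linfn R, beta (foldl (fun a x => lf_comp (f x) a) acc [:: im]) =
      alpha (f im) * beta acc + beta (f im) by [].
    by rewrite aim mul0r add0r bim.
  + apply: bigmin_ge; first exact: lower.
    by move=> s _; apply: lower.
Qed.
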